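(* Let $X$ be a nonempty set and $G\le S_X$. There is a one-to-one correspondence between racks (resp. quandles) $(X,* )$ satisfying $\mathrm{LMlt}(X,* )=G$ and rack envelopes (resp. quandle envelopes) of the form $(G,\Lambda)$. Given such a rack/quandle $(X,* )$, the corresponding envelope is $\mathbf E(X,* )=(G,(L_x:x\in X/G))$; given a rack/quandle envelope $(G,\Lambda)$, the corresponding rack/quandle is $\mathbf R(G,\Lambda)$; these two maps are mutually inverse.
   Context: Permutations act on the right ($xf$ is the image of $x$ under $f$; $fg$ means $f$ first, then $g$); $g^f=f^{-1}gf$, $f^G=\{f^g:g\in G\}$. For $G\le S_X$, $xG$ is the orbit of $x$, $G_x$ its stabilizer, $X/G$ a fixed complete set of orbit representatives; $C_G(H)$ is the centralizer, $Z(H)$ the center. A left quasigroup is a groupoid $(X,* )$ whose left translations $L_x$ ($yL_x=x*y$) are bijections; a rack is a left quasigroup with $x*(y*z)=(x*y)*(x*z)$; a quandle is a rack with $x*x=x$; $\mathrm{LMlt}(X,* )=\langle L_x:x\in X\rangle$. A pair $(G,(\lambda_x:x\in X/G))$ with $G\le S_X$ is a rack folder (resp. quandle folder) if $\lambda_x\in C_G(G_x)$ (resp. $\lambda_x\in Z(G_x)$) for every $x\in X/G$; it is a rack envelope (resp. quandle envelope) if moreover $\langle\bigcup_{x\in X/G}\lambda_x^G\rangle=G$. For a rack folder $(G,\Lambda)$, $\Lambda=(\lambda_x:x\in X/G)$, the rack $\mathbf R(G,\Lambda)=(X,* )$ is defined by $L_y=(\lambda_x)^{g_y}$ whenever $x\in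 X/G$, $y\in xG$ and $g_y\in G$ satisfies $xg_y=y$ (this is independent of the choice of $g_y$). *)

(* Defs.v *)
(* Permutations of an arbitrary (possibly infinite) set X are
   represented as bijective functions X -> X; a permutation group G <= S_X is
   a predicate on functions X -> X closed under the group operations.
   Convention (as in the paper): permutations act on the RIGHT, x f := f x,
   and fg := "f first, then g" = fun x => g (f x). *)
From Stdlib Require Import ClassicalEpsilon.
Set Implicit Arguments.

Section RackDefs.
Variable X : Type.

Definition pmul (f g : X -> X) : X -> X := fun x => g (f x).

Definition inverse_pair (f h : X -> X) : Prop :=
  (forall x, h (f x) = x) /\ (forall x, f (h x) = x).

Definition is_perm (f : X -> X) : Prop := exists h, inverse_pair f h.

Definition subgroup (G : (X -> X) -> Prop) : Prop :=
  (forall f, G f -> is_perm f) /\ G (fun x => x) /\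
  (forall f g, G f -> G g -> G (pmul f g)) /\
  (forall f h, G f -> inverse_pair f h -> G h).

Definition generated (S : (X -> X) -> Prop) (f : X -> X) : Prop :=
  forall H, subgroup H -> (forall s, S s -> H s) -> H f.

Definition pred_eq (A B : (X -> X) -> Prop) : Prop := forall f, A f <-> B f.

Definition orbit (G : (X -> X) -> Prop) (x y : X) : Prop :=
  exists g, G g /\ g x = y.

Definition orbit_reps (G : (X -> X) -> Prop) (Rep : X -> Prop) : Prop :=
  (forall y, exists x, Rep x /\ orbit G x y) /\
  (forall x1 x2, Rep x1 -> Rep x2 -> orbit G x1 x2 -> x1 = x2).

Definition stabilizer (G : (X -> X) -> Prop) (x : X) (f : X -> X) : Prop :=
  G f /\ f x = x.

Definition commute (f g : X -> X) : Prop := pmul f g = pmul g f.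

Definition centralizer (G H : (X -> X) -> Prop) (f : X -> X) : Prop :=
  G f /\ forall h, H h -> commute f h.

Definition center (H : (X -> X) -> Prop) : (X -> X) -> Prop := centralizer H H.

(* lam^G = { g^{-1} lam g : g in G };  z (g^{-1} lam g) = g (lam (g^{-1} z)) *)
Definition conjugates (G : (X -> X) -> Prop) (lam : X -> X) (k : X -> X) : Prop :=
  exists g h, G g /\ inverse_pair g h /\ k = (fun z => g (lam (h z))).

(* A family Lambda = (lam_x : x in X/G) is a function lam : X -> (X -> X),
   of which only the values at representatives (Rep x) matter. *)
Definition rack_folder (G : (X -> X) -> Prop) (Rep : X -> Prop)
  (lam : X -> (X -> X)) : Prop :=
  forall x, Rep x -> centralizer G (stabilizer G x) (lam x).

Definition quandle_folder (G : (X -> X) -> Prop) (Rep : X -> Prop)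
  (lam : X -> (X -> X)) : Prop :=
  forall x, Rep x -> center (stabilizer G x) (lam x).

Definition envelope_gen (G : (X -> X) -> Prop) (Rep : X -> Prop)
  (lam : X -> (X -> X)) : Prop :=
  pred_eq (generated (fun k => exists x, Rep x /\ conjugates G (lam x) k)) G.

Definition rack_envelope G Rep lam : Prop :=
  rack_folder G Rep lam /\ envelope_gen G Rep lam.

Definition quandle_envelope G Rep lam : Prop :=
  quandle_folder G Rep lam /\ envelope_gen G Rep lam.

(* (X, op) with L_x = op x, i.e. x * y = op x y *)
Definition left_quasigroup (op : X -> X -> X) : Prop := forall x, is_perm (op x).

Definition is_rack (op : X -> X -> X) : Prop :=
  left_quasigroup op /\
  forall x y z, op x (op y z) = op (op x y) (op x z).

Definition is_quandle (op : X -> X -> X) : Prop :=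
  is_rack op /\ forall x, op x x = x.

Definition LMlt (op : X -> X -> X) : (X -> X) -> Prop :=
  generated (fun f => exists x, f = op x).

(* E(X, op) = (G, (L_x : x in X/G)) : the family part *)
Definition env_of (op : X -> X -> X) : X -> (X -> X) := fun x => op x.

(* R(G, Lambda): L_y = (lam_x)^{g_y}, x in X/G, y in xG, x g_y = y,
   with g_y (and its inverse) chosen by Hilbert's epsilon. *)
Definition rack_of (G : (X -> X) -> Prop) (Rep : X -> Prop)
  (lam : X -> (X -> X)) : X -> X -> X :=
  fun y z =>
    let t := epsilon (inhabits (y, (fun u : X => u), (fun u : X => u)))
      (fun t : X * (X -> X) * (X -> X) =>
         let '(x, g, h) := t in Rep x /\ G g /\ inverse_pair g h /\ g x = y) in
    let '(x, g, h) := t in g (lam x (h z)).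

End RackDefs.

(* Main.v *)
Require Import Defs.
From Stdlib Require Import ClassicalEpsilon FunctionalExtensionality.
Set Implicit Arguments.

Lemma sub_perm (X : Type) (G : (X -> X) -> Prop) (HG : subgroup G) {f} :
  G f -> is_perm f.
Proof. destruct HG as [A _]; auto. Qed.

Lemma sub_inv (X : Type) (G : (X -> X) -> Prop) (HG : subgroup G) {f h} :
  G f -> inverse_pair f h -> G h.
Proof. destruct HG as [_ [_ [_ A]]]; eauto. Qed.

Lemma sub_comp (X : Type) (G : (X -> X) -> Prop) (HG : subgroup G) {f g} :
  G f -> G g -> G (fun x => g (f x)).
Proof. destruct HG as [_ [_ [A _]]]; intros; apply (A f g); auto. Qed.

Lemma sub_id (X : Type) (G : (X -> X) -> Prop) (HG : subgroup G) :
  G (fun x => x).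
Proof. destruct HG as [_ [A _]]; auto. Qed.

Lemma gen_sub (X : Type) {S H : (X -> X) -> Prop} {f} :
  subgroup H -> (forall s, S s -> H s) -> generated S f -> H f.
Proof. intros A B C; apply C; auto. Qed.

Lemma gen_in (X : Type) {S : (X -> X) -> Prop} {s} : S s -> generated S s.
Proof. intros A H B C; auto. Qed.

Lemma gen_mono (X : Type) {S T : (X -> X) -> Prop} {f} :
  (forall s, S s -> generated T s) -> generated S f -> generated T f.
Proof. intros A B H HH C. apply B; auto. intros s Ss; apply (A s Ss H HH C). Qed.

Lemma inv_sym (X : Type) (f h : X -> X) : inverse_pair f h -> inverse_pair h f.
Proof. intros [A B]; split; auto. Qed.

Lemma cov1 (X : Type) (G : (X -> X) -> Prop) (op : X -> X -> X) :
  is_rack op -> pred_eq (LMlt op) G -> forall g, G g ->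
  is_perm g /\ forall x z, op (g x) (g z) = g (op x z).
Proof.
  intros [Hq Hr] HL g Gg.
  apply HL in Gg.
  apply (gen_sub (H := fun g => is_perm g /\ forall x z, op (g x) (g z) = g (op x z))) in Gg;
    [exact Gg | | ].
  - split; [ | split; [ | split]].
    + intros f [A _]; exact A.
    + split; [exists (fun x => x); split; auto | auto].
    + intros f g0 [[hf [Af Bf]] Cf] [[hg [Ag Bg]] Cg]. unfold pmul. split.
      * exists (fun x => hf (hg x)); split; intros x; [rewrite Ag, Af | rewrite Bf, Bg]; auto.
      * intros x z. rewrite Cg, Cf. reflexivity.
    + intros f h [Pf Cf] [A B]. split.
      * exists f; split; auto.
      * intros x z. rewrite <- (A (op (h x) (h z))). rewrite <- Cf, !B. reflexivity.
  - intros s [y ->]. split; [apply Hq|]. intros x z. symmetry; apply Hr.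
Qed.

Lemma rack_env1 (X : Type) (G : (X -> X) -> Prop) (HG : subgroup G)
  (Rep : X -> Prop) (HRep : orbit_reps G Rep) {op : X -> X -> X} :
  is_rack op -> pred_eq (LMlt op) G ->
  (forall x, G (op x)) /\
  (forall x f, stabilizer G x f -> commute (op x) f) /\
  envelope_gen G Rep (env_of op) /\ rack_of G Rep (env_of op) = op.
Proof.
  intros Hr HL.
  assert (Gop : forall x, G (op x)).
  { intros x. apply (proj1 (HL _)). apply gen_in. eauto. }
  assert (Cov := cov1 Hr HL).
  split; [exact Gop | split; [ | split]].
  - intros x f [Gf Ef]. unfold commute, pmul. extensionality u.
    destruct (Cov f Gf) as [_ C]. rewrite <- C, Ef. reflexivity.
  - intros f; split; intros A.
    + revert A; apply gen_sub; [exact HG|].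
      intros s [x [Rx [g [h [Gg [Ip ->]]]]]].
      apply (sub_comp HG); [apply (sub_comp HG)|]; auto.
      apply (sub_inv HG Gg Ip).
    + apply HL in A. revert A. apply gen_mono.
      intros s [y ->]. apply gen_in.
      destruct HRep as [Ex _]. destruct (Ex y) as [x [Rx [g [Gg Eg]]]].
      destruct (sub_perm HG Gg) as [h Ip].
      exists x; split; auto. exists g, h; split; auto; split; auto.
      unfold env_of. extensionality z.
      destruct (Cov g Gg) as [_ C]. rewrite <- C, <- Eg. destruct Ip as [_ B]. rewrite B. reflexivity.
  - extensionality y. extensionality z. unfold rack_of. cbv beta zeta.
    match goal with |- context [epsilon ?i ?P] =>
      assert (Hex: exists t, P t);
      [ | generalize (epsilon_spec i P Hex); destruct (epsilon i P) as [[x g] h]] end.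
    + destruct HRep as [Ex _]. destruct (Ex y) as [x [Rx [g [Gg Eg]]]].
      destruct (sub_perm HG Gg) as [h Ip].
      exists (x, g, h). auto.
    + intros [Rx [Gg [[A B] Eg]]]. unfold env_of.
      destruct (Cov g Gg) as [_ C]. rewrite <- C, Eg, B. reflexivity.
Qed.

Section Dir2.
End Dir2.

Lemma spec2 (X : Type) (G : (X -> X) -> Prop) (HG : subgroup G)
  (Rep : X -> Prop) (HRep : orbit_reps G Rep) {lam : X -> X -> X}
  (Hlam : forall x, Rep x -> G (lam x) /\ forall f, stabilizer G x f -> commute (lam x) f) :
  forall y x g h, Rep x -> G g -> inverse_pair g h -> g x = y ->
  forall z, rack_of G Rep lam y z = g (lam x (h z)).
Proof.
  intros y x g h Rx Gg Ip Eg z. unfold rack_of. cbv beta zeta.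
  match goal with |- context [epsilon ?i ?P] =>
    assert (Hex: exists t, P t);
    [ exists (x, g, h); auto
    | generalize (epsilon_spec i P Hex); destruct (epsilon i P) as [[x' g'] h']] end.
  intros [Rx' [Gg' [[A' B'] Eg']]].
  destruct Ip as [A B].
  assert (Gh : G h) by (apply (sub_inv HG Gg); split; auto).
  assert (x' = x).
  { destruct HRep as [_ U]. apply U; auto. exists (fun u => h (g' u)). split.
    - apply (sub_comp HG); auto.
    - rewrite Eg', <- Eg, A. reflexivity. }
  subst x'.
  destruct (Hlam x Rx) as [_ Cm].
  assert (St : stabilizer G x (fun u => h (g' u))).
  { split; [apply (sub_comp HG); auto | rewrite Eg', <- Eg, A; reflexivity]. }
  specialize (Cm _ St). unfold commute, pmul in Cm.
  pose proof (equal_f Cm (h' z)) as E. cbv beta in E. rewrite B' in E.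
  rewrite <- E, B. reflexivity.
Qed.

Lemma rack_env2 (X : Type) (G : (X -> X) -> Prop) (HG : subgroup G)
  (Rep : X -> Prop) (HRep : orbit_reps G Rep) {lam : X -> X -> X}
  (Hlam : forall x, Rep x -> G (lam x) /\ forall f, stabilizer G x f -> commute (lam x) f)
  (Hgen : envelope_gen G Rep lam) :
  is_rack (rack_of G Rep lam) /\ pred_eq (LMlt (rack_of G Rep lam)) G /\
  (forall x, Rep x -> env_of (rack_of G Rep lam) x = lam x) /\
  (forall y, exists x g h, Rep x /\ G g /\ inverse_pair g h /\ g x = y).
Proof.
  set (op := rack_of G Rep lam).
  assert (Ex : forall y, exists x g h, Rep x /\ G g /\ inverse_pair g h /\ g x = y).
  { intros y. destruct HRep as [E _]. destruct (E y) as [x [Rx [g [Gg Eg]]]].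
    destruct (sub_perm HG Gg) as [h Ip]. exists x, g, h; auto. }
  assert (Sp := spec2 HG HRep Hlam).
  assert (Gop : forall y, G (op y)).
  { intros y. destruct (Ex y) as [x [g [h [Rx [Gg [Ip Eg]]]]]].
    replace (op y) with (fun z => g (lam x (h z))).
    - apply (sub_comp HG); [apply (sub_comp HG)|]; auto.
      + apply (sub_inv HG Gg Ip).
      + apply Hlam; auto.
    - extensionality z. symmetry. apply (Sp y x g h); auto. }
  assert (Cov : forall k k', G k -> inverse_pair k k' -> forall b z,
             op (k b) z = k (op b (k' z))).
  { intros k k' Gk Ik b z. destruct (Ex b) as [x [g [h [Rx [Gg [Ip Eg]]]]]].
    rewrite (Sp b x g h); auto.
    rewrite (Sp (k b) x (fun u => k (g u)) (fun u => h (k' u))); auto.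
    - apply (sub_comp HG); auto.
    - destruct Ip as [A B]; destruct Ik as [C D]; split; intros u;
        [rewrite C, A | rewrite B, D]; auto.
    - rewrite Eg; auto. }
  split; [ | split; [ | split]]; auto.
  - split.
    + intros y. apply (sub_perm HG), Gop.
    + intros a b c. destruct (sub_perm HG (Gop a)) as [k' Ik].
      rewrite (Cov (op a) k' (Gop a) Ik). destruct Ik as [A B]. rewrite A. reflexivity.
  - intros f; split; intros A.
    + revert A; apply gen_sub; [exact HG|]. intros s [y ->]; auto.
    + apply Hgen in A. revert A. apply gen_mono.
      intros s [x [Rx [g [h [Gg [Ip ->]]]]]]. apply gen_in.
      exists (g x). extensionality z. symmetry; apply (Sp (g x) x g h); auto.
  - intros x Rx. unfold env_of. extensionality z.
    apply (Sp x x (fun u => u) (fun u => u)); auto.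
    + apply (sub_id HG).
    + split; auto.
Qed.

Theorem theorem3p4 (X : Type) (HX : inhabited X)
  (G : (X -> X) -> Prop) (HG : subgroup G)
  (Rep : X -> Prop) (HRep : orbit_reps G Rep) :
  (* racks *)
  ((forall op : X -> X -> X, is_rack op -> pred_eq (LMlt op) G ->
      rack_envelope G Rep (env_of op) /\ rack_of G Rep (env_of op) = op) /\
   (forall lam : X -> (X -> X), rack_envelope G Rep lam ->
      is_rack (rack_of G Rep lam) /\ pred_eq (LMlt (rack_of G Rep lam)) G /\
      (forall x, Rep x -> env_of (rack_of G Rep lam) x = lam x))) /\
  (* quandles *)
  ((forall op : X -> X -> X, is_quandle op -> pred_eq (LMlt op) G ->
      quandle_envelope G Rep (env_of op) /\ rack_of G Rep (env_of op) = op) /\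
   (forall lam : X -> (X -> X), quandle_envelope G Rep lam ->
      is_quandle (rack_of G Rep lam) /\ pred_eq (LMlt (rack_of G Rep lam)) G /\
      (forall x, Rep x -> env_of (rack_of G Rep lam) x = lam x))).
Proof.
  split; split.
  - intros op Hr HL. destruct (rack_env1 HG HRep Hr HL) as [A [B [C D]]].
    split; auto. split; auto. intros x Rx. split; [apply A|].
    intros h Sh. apply B; auto.
  - intros lam [Hf Hg].
    assert (Hlam : forall x, Rep x -> G (lam x) /\ forall f, stabilizer G x f -> commute (lam x) f).
    { intros x Rx. destruct (Hf x Rx) as [A B]. auto. }
    destruct (rack_env2 HG HRep Hlam Hg) as [A [B [C _]]]. auto.
  - intros op [Hr Hi] HL. destruct (rack_env1 HG HRep Hr HL) as [A [B [C D]]].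
    split; auto. split; auto. intros x Rx.
    assert (St : stabilizer G x (env_of op x)) by (split; [apply A | apply Hi]).
    split; [exact St|]. intros h Sh. apply B; auto.
  - intros lam [Hf Hg].
    assert (Hlam : forall x, Rep x -> G (lam x) /\ forall f, stabilizer G x f -> commute (lam x) f).
    { intros x Rx. destruct (Hf x Rx) as [[A1 A2] B]. split; auto.
      }
    destruct (rack_env2 HG HRep Hlam Hg) as [A [B [C Ex]]].
    split; [split; auto|]; auto.
    intros y. destruct (Ex y) as [x [g [h [Rx [Gg [Ip Eg]]]]]].
    rewrite (@spec2 X G HG Rep HRep lam Hlam y x g h Rx Gg Ip Eg); auto.
    destruct Ip as [P Q]. rewrite <- Eg, P.
    destruct (Hf x Rx) as [[_ Fx] _]. rewrite Fx. reflexivity.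
Qed.
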